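(* Let $\beta$ be a primitive $2p$-th root of unity in $\mathbb{F}_q$, let $\eta_0=\sum_{i\in D_0^{(p)}}\beta^{2i}$, $\eta_1=\sum_{i\in D_1^{(p)}}\beta^{2i}$, and let $S(x)$ be the generating polynomial of the sequence $s$, viewed in $\mathbb{F}_q[x]$. Then, with integers interpreted in $\mathbb{F}_q$ via the canonical map $\mathbb{Z}\to\mathbb{F}_q$: (1) if $p\equiv\pm1\pmod 8$, $$S(\beta^k)=\begin{cases} p, & k=0,\\ 1, & k\in D_0^{(2p)}\cup D_1^{(2p)}\cup\{p\},\\ 1+2\eta_1, & k\in 2D_0^{(p)},\\ 1+2\eta_0, & k\in 2D_1^{(p)};\end{cases}$$ (2) if $p\equiv\pm3\pmod 8$, $$S(\beta^k)=\begin{cases} p, & k=0,\\ 1, & k=p,\\ -2\eta_0, & k\in D_0^{(2p)},\\ -2\eta_1, & k\in D_1^{(2p)},\\ 0, & k\in 2D_0^{(p)}\cup 2D_1^{(p)}.\end{cases}$$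
   Context: Let $p$ be an odd prime and $g$ an odd integer which is a primitive root modulo $p$ and modulo $2p$. Define $D_0^{(p)}=\{g^{2k}\bmod p : 0\le k\le \frac{p-1}{2}-1\}$, $D_1^{(p)}=\{g^{2k+1}\bmod p : 0\le k\le \frac{p-1}{2}-1\}$, $D_0^{(2p)}=\{g^{2k}\bmod 2p : 0\le k\le \frac{p-1}{2}-1\}$, $D_1^{(2p)}=\{g^{2k+1}\bmod 2p : 0\le k\le \frac{p-1}{2}-1\}$, viewed as subsets of $\{0,\dots,p-1\}$ resp. $\mathbb{Z}_{2p}=\{0,1,\dots,2p-1\}$. For $j\in\{0,1\}$ let $2D_j^{(p)}=\{2a \bmod 2p : a\in D_j^{(p)}\}\subseteq \mathbb{Z}_{2p}$. Then $\mathbb{Z}_{2p}$ is the disjoint union of $D_0^{(2p)},D_1^{(2p)},2D_0^{(p)},2D_1^{(p)},\{p\},\{0\}$. Let $C_1=D_1^{(2p)}\cup 2D_1^{(p)}\cup\{0\}$ and $C_0=D_0^{(2p)}\cup 2D_0^{(p)}\cup\{p\}$. The binary sequence $s=(s_i)_{i\ge 0}$ of period $2p$ is defined by $s_i=1$ if $i\bmod 2p\in C_1$ and $s_i=0$ if $i\bmod 2p\in C_0$. Its generating polynomial is $S(x)=\sum_{i=0}^{2p-1}s_ix^i=1+\sum_{i\in D_1^{(2p)}}x^i+\sum_{i\in 2D_1^{(p)}}x^i$. Let $r\ge 5$ be a prime with $r\ne p$, $m$ the multiplicative order of $r$ modulo $p$, and $q=r^m$ (so $2p\mid q-1$). *)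

(* Defs.v *)
From HB Require Import structures.
From mathcomp Require Import all_boot all_order all_algebra all_field.
Set Implicit Arguments. Unset Strict Implicit. Unset Printing Implicit Defensive.
Import GRing.Theory.

Definition eqmodz (n : nat) (a b : int) : bool :=
  (modz a (Posz n) == modz b (Posz n)).

Definition primroot_mod (n : nat) (g : int) : bool :=
  eqmodz n (g ^+ totient n)%R 1 &&
  [forall k : 'I_(totient n), (0 < (k : nat))%N ==> ~~ eqmodz n (g ^+ k)%R 1].

Definition is_ord_mod (p r m : nat) : Prop :=
  (0 < m)%N /\ r ^ m = 1 %[mod p] /\
  (forall k, (0 < k < m)%N -> r ^ k <> 1 %[mod p]).

Definition resz (n : nat) (a : int) : nat := absz (modz a (Posz n)).

Definition Dset (p n j : nat) (g : int) : seq nat :=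
  [seq resz n (g ^+ (2 * k + j))%R | k <- iota 0 (p.-1)./2].

Definition twoD (p j : nat) (g : int) : seq nat :=
  [seq (2 * a) %% (2 * p) | a <- Dset p p j g].

Definition C1 (p : nat) (g : int) : seq nat :=
  0 :: Dset p (2 * p) 1 g ++ twoD p 1 g.

Definition sseq (p : nat) (g : int) (i : nat) : bool :=
  (i %% (2 * p)) \in C1 p g.

Definition Spoly (R : nzRingType) (p : nat) (g : int) : {poly R} :=
  (\poly_(i < 2 * p) ((sseq p g i)%:R : R))%R.

Definition eta_sum (F : fieldType) (p j : nat) (g : int) (beta : F) : F :=
  (\sum_(i < p | (i : nat) \in Dset p p j g) beta ^+ (2 * i))%R.

(* Main.v *)
Require Import Defs.
From HB Require Import structures.
From mathcomp Require Import all_boot all_order all_algebra all_field zify ring lra.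
Import GRing.Theory Num.Theory.
Local Open Scope ring_scope.


Lemma intFp (p n : nat) (a : int) : prime p -> (0 < n)%N -> (p %| n)%N ->
  (a%:~R : 'F_p) = (resz n a)%:R.
Proof.
move=> pp n0 pn.
have n0' : (n%:Z != 0) by rewrite eqz_nat -lt0n.
rewrite {1}(divz_eq a n) intrD intrM /=.
have -> : ((n%:Z)%:~R : 'F_p) = 0.
  by rewrite -pmulrn; apply/eqP; rewrite -(dvdn_pcharf (pchar_Fp pp)).
rewrite mulr0 add0r /resz [in RHS]pmulrn gez0_abs ?modz_ge0 //.
Qed.

Lemma resz_lt n a : (0 < n)%N -> (resz n a < n)%N.
Proof. move=> n0; rewrite /resz; lia. Qed.

Lemma Fp_nat_inj (p a b : nat) : prime p -> (a < p)%N -> (b < p)%N ->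
  (a%:R : 'F_p) = b%:R -> a = b.
Proof.
move=> pp ap bp e.
have := congr1 (@nat_of_ord _) e; by rewrite !val_Fp_nat // !modn_small.
Qed.

Lemma resz_odd n (a : int) : (0 < n)%N -> odd `|a|%N -> odd (resz (2 * n) a).
Proof.
move=> n0 oa; rewrite /resz.
have := divz_eq a (2 * n)%N.
have : (0 <= (a %% (2 * n)%N)%Z) by rewrite modz_ge0 // eqz_nat; lia.
move: (a %% (2 * n)%N)%Z => r.
have -> : ((a %/ (2 * n)%N)%Z * (2 * n)%N%:Z) = 2 * ((a %/ (2 * n)%N)%Z * n%:Z).
  by rewrite PoszM; ring.
move: ((a %/ (2 * n)%N)%Z * n%:Z) => k.
move=> r0 ea; move: oa; rewrite ea. lia.
Qed.

Set Implicit Arguments. Unset Strict Implicit. Unset Printing Implicit Defensive.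


Definition isord (K : fieldType) (x : K) (N : nat) :=
  x ^+ N = 1 /\ forall k, (0 < k < N)%N -> x ^+ k != 1.

Lemma isord_neq0 (K : fieldType) (x : K) N : (0 < N)%N -> isord x N -> x != 0.
Proof.
move=> N0 [h1 _]; apply/eqP=> x0; move: h1; rewrite x0 expr0n.
by case: N N0 => // N _ /eqP; rewrite eq_sym oner_eq0.
Qed.

Lemma isord_mod (K : fieldType) (x : K) N n : isord x N -> x ^+ n = x ^+ (n %% N).
Proof. by move=> [h1 _]; rewrite expr_mod. Qed.

Lemma isord_dvd (K : fieldType) (x : K) N n : (0 < N)%N -> isord x N ->
  x ^+ n = 1 -> (N %| n)%N.
Proof.
move=> N0 o e; rewrite /dvdn; apply/negPn/negP => ne.
have [_ h2] := o.
have := h2 (n %% N)%N; rewrite ltn_mod N0 lt0n ne => /(_ isT).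
by rewrite -isord_mod // e eqxx.
Qed.

Lemma isord_inj (K : fieldType) (x : K) N a b : (0 < N)%N -> isord x N ->
  (a < N)%N -> (b < N)%N -> x ^+ a = x ^+ b -> a = b.
Proof.
move=> N0 o aN bN.
wlog ab : a b aN bN / (a <= b)%N.
  move=> H e; case: (leqP a b) => ab; first exact: H.
  by apply/esym/H => //; rewrite ?(ltnW ab) ?e.
move=> e.
have xa0 : x ^+ a != 0 by rewrite expf_neq0 // (isord_neq0 N0 o).
have : x ^+ (b - a) = 1.
  apply: (mulfI xa0); rewrite -exprD subnKC // mulr1 //.
move/(isord_dvd N0 o) => d.
have : (b - a = 0)%N.
  case: (posnP (b - a)) => // h; have := dvdn_leq h d; lia.
lia.
Qed.

Lemma isord_half (K : fieldType) (x : K) h : (0 < h)%N -> isord x (2 * h) ->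
  x ^+ h = -1.
Proof.
move=> h0 o; have [h1 h2] := o.
have : (x ^+ h) ^+ 2 == 1 by rewrite -exprM mulnC h1.
rewrite sqrf_eq1 => /orP [/eqP e|/eqP //].
by have := h2 h; rewrite h0 e eqxx /=; move=> /(_ _)/negP; lia.
Qed.


Lemma intXFp p (g : int) k : ((g ^+ k)%:~R : 'F_p) = (g%:~R) ^+ k.
Proof. by rewrite rmorphXn. Qed.

Lemma eqmodzFp p a b : prime p -> eqmodz p a b = ((a%:~R : 'F_p) == b%:~R).
Proof.
move=> pp; have p0 := prime_gt0 pp.
rewrite (intFp p p a pp p0 (dvdnn p)) (intFp p p b pp p0 (dvdnn p)) /eqmodz.
apply/eqP/eqP => [e|e].
  by rewrite /resz e.
have := Fp_nat_inj _ _ _ pp (resz_lt p a p0) (resz_lt p b p0) e.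
rewrite /resz => e2.
rewrite -(gez0_abs (modz_ge0 a _)) ?eqz_nat -?lt0n // e2.
by rewrite gez0_abs // modz_ge0 // eqz_nat -lt0n.
Qed.

Lemma primroot_isord p g : prime p -> primroot_mod p g ->
  isord ((g%:~R : 'F_p)) p.-1.
Proof.
move=> pp /andP [h1 /forallP h2].
rewrite totient_prime // in h1 h2.
split.
  by move: h1; rewrite eqmodzFp // intXFp => /eqP ->.
move=> k /andP [k0 kp].
have := h2 (Ordinal kp); rewrite /= k0 /= eqmodzFp // intXFp.
by [].
Qed.


Lemma natFp_neq0 p n : prime p -> (0 < n < p)%N -> (n%:R : 'F_p) != 0.
Proof.
move=> pp /andP [n0 np].
rewrite -(dvdn_pcharf (pchar_Fp pp)); apply/negP => /dvdn_leq; lia.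
Qed.

Definition gf (p h : nat) (i : nat) : nat :=
  if (2 * i.+1 <= h)%N then (2 * i).+1 else (p - 2 * i.+1).-1.

Lemma gauss2 p h : prime p -> p = (2 * h + 1)%N ->
  (2%:R : 'F_p) ^+ h = (-1) ^+ (h - h %/ 2).
Proof.
move=> pp ph.
have gfb : forall i : 'I_h, (gf p h i < h)%N.
  by move=> [i ih]; rewrite /gf; case: ifP => /=; lia.
pose f (i : 'I_h) : 'I_h := Ordinal (gfb i).
have finj : injective f.
  move=> [i ih] [j jh] /(congr1 val) /=; rewrite /gf => e; apply/val_inj => /=.
  move: e; case: ifP; case: ifP; lia.
pose P := \prod_(i < h) ((i.+1)%:R : 'F_p).
have P0 : P != 0.
  by apply/prodf_neq0 => i _; apply: natFp_neq0 => //; have := ltn_ord i; lia.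
have E1 : \prod_(i < h) (((2 * i.+1)%N)%:R : 'F_p) = 2%:R ^+ h * P.
  rewrite (eq_bigr (fun i : 'I_h => 2%:R * (i.+1)%:R)); last by move=> i _; rewrite natrM.
  by rewrite big_split /= prodr_const card_ord.
have E2 : \prod_(i < h) (((2 * i.+1)%N)%:R : 'F_p) =
          (\prod_(i < h) (if (h < 2 * i.+1)%N then -1 else 1)) * P.
  rewrite /P [X in _ = _ * X](reindex_inj finj) -big_split /=.
  apply: eq_bigr => i _ /=; move: i => [i ih]; rewrite /gf /=.
  case: ifP => hi /=; case: ifP => hi2 /=.
  - lia.
  - have -> : ((p - 2 * i.+1).-1.+1 = p - 2 * i.+1)%N by lia.
    rewrite mulN1r natrB; last by lia.
    by rewrite (pchar_Fp_0 pp) sub0r opprK.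
  - by rewrite mul1r; congr (_%:R); lia.
  - lia.
have E3 : \prod_(i < h) (if (h < 2 * i.+1)%N then -1 else 1) = (-1) ^+ (h - h %/ 2) :> 'F_p.
  rewrite -(big_mkord xpredT (fun i => if (h < 2 * i.+1)%N then -1 else 1)).
  rewrite (big_cat_nat (n := (h %/ 2)%N)) //=; last by lia.
  rewrite big_nat_cond big1 ?mul1r; last by move=> i /andP [/andP [_ ih] _]; case: ifP => //; lia.
  rewrite big_nat_cond (eq_bigr (fun _ => -1)); last by move=> i /andP [/andP [ih _] _]; case: ifP => //; lia.
  by rewrite -big_nat_cond prodr_const_nat.
have := E1; rewrite E2 E3 => /(mulIf P0) //.
Qed.

Lemma two_char p : prime p -> odd p ->
  ((p %% 8 == 1)%N || (p %% 8 == 7)%N -> (2%:R : 'F_p) ^+ (p.-1)./2 = 1) /\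
  ((p %% 8 == 3)%N || (p %% 8 == 5)%N -> (2%:R : 'F_p) ^+ (p.-1)./2 = -1).
Proof.
move=> pp op.
have ph : p = (2 * (p.-1)./2 + 1)%N by lia.
rewrite (gauss2 pp ph).
move: ((p.-1)./2) ph => h ph.
split => /orP H.
  have [b ->] : exists b, (h - h %/ 2 = 2 * b)%N.
    exists ((h - h %/ 2) %/ 2)%N; case: H => /eqP H; lia.
  by rewrite exprM sqrrN expr1n expr1n.
have [b ->] : exists b, (h - h %/ 2 = 2 * b + 1)%N.
  exists ((h - h %/ 2) %/ 2)%N; case: H => /eqP H; lia.
by rewrite exprD exprM sqrrN !expr1n mul1r expr1.
Qed.


Section Rot.
Variables (K : finFieldType) (V : nmodType) (G : K) (h : nat).
Hypothesis h0 : (0 < h)%N.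
Hypothesis Go : isord G (2 * h).

Lemma shift_sum (f : K -> V) s j :
  \sum_(k < h) f (G ^+ (2 * (k + s) + j)) = \sum_(k < h) f (G ^+ (2 * k + j)).
Proof.
have E : forall k, G ^+ (2 * (k + s) + j) = G ^+ (2 * ((k + s) %% h) + j).
  move=> k; rewrite {1}(divn_eq (k + s) h).
  have -> : (2 * ((k + s) %/ h * h + (k + s) %% h) + j =
             (2 * h) * ((k + s) %/ h) + (2 * ((k + s) %% h) + j))%N by ring.
  have [G1 _] := Go.
  by rewrite exprD exprM G1 expr1n mul1r.
have fb : forall k : 'I_h, ((k + s) %% h < h)%N by move=> k; rewrite ltn_mod.
pose r (k : 'I_h) : 'I_h := Ordinal (fb k).
have rinj : injective r.
  move=> [a ah] [b bh] /(congr1 val) /= e; apply/val_inj => /=.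
  by move/eqP: e; rewrite eqn_modDr !modn_small // => /eqP.
rewrite [RHS](reindex_inj rinj) /=.
by apply: eq_bigr => k _; rewrite E.
Qed.

Definition etaS (f : K -> V) j := \sum_(k < h) f (G ^+ (2 * k + j)).
Definition Rs (f : K -> V) z j := \sum_(k < h) f (z * G ^+ (2 * k + j)).

Lemma Rs_even f s j : Rs f (G ^+ (2 * s)) j = etaS f j.
Proof.
rewrite /Rs /etaS -(shift_sum f s j); apply: eq_bigr => k _.
by rewrite -exprD; congr (f (G ^+ _)); lia.
Qed.

Lemma Rs_odd0 f s : Rs f (G ^+ (2 * s + 1)) 0 = etaS f 1.
Proof.
rewrite /Rs /etaS -(shift_sum f s 1); apply: eq_bigr => k _.
by rewrite -exprD; congr (f (G ^+ _)); lia.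
Qed.

Lemma Rs_odd1 f s : Rs f (G ^+ (2 * s + 1)) 1 = etaS f 0.
Proof.
rewrite /Rs /etaS -(shift_sum f s.+1 0); apply: eq_bigr => k _.
by rewrite -exprD; congr (f (G ^+ _)); lia.
Qed.

Hypothesis cardK : #|K| = (2 * h).+1.

Lemma image_nz : [set G ^+ (i : nat) | i : 'I_(2 * h)] = [set~ 0].
Proof.
have N0 : (0 < 2 * h)%N by lia.
have inj : injective (fun i : 'I_(2 * h) => G ^+ i).
  move=> a b /(isord_inj N0 Go (ltn_ord a) (ltn_ord b)); exact: val_inj.
apply/eqP; rewrite eqEcard cardsC1 cardK card_imset // card_ord leqnn andbT.
apply/subsetP => x /imsetP [i _ ->]; rewrite !inE expf_neq0 //.
exact: (isord_neq0 N0 Go).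
Qed.

Lemma nz_pow z : z != 0 -> exists t, z = G ^+ t.
Proof.
move=> z0; have : z \in [set~ 0] by rewrite !inE.
by rewrite -image_nz => /imsetP [i _ ->]; exists i.
Qed.

Hypothesis m1 : (1 : K) != -1.

Lemma Ghalf : G ^+ h = -1.
Proof. exact: isord_half. Qed.

Lemma Gt_h t : (G ^+ t) ^+ h = if odd t then -1 else 1.
Proof.
have [G1 _] := Go.
rewrite -exprM {1}(divn_eq t 2) modn2.
have -> : ((t %/ 2 * 2 + odd t) * h = (2 * h) * (t %/ 2) + odd t * h)%N by ring.
rewrite exprD exprM G1 expr1n mul1r.
by case: (odd t); rewrite ?mul1n ?mul0n ?expr0 ?Ghalf.
Qed.

Lemma nz_of_pow (z : K) : z ^+ h = 1 \/ z ^+ h = -1 -> z != 0.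
Proof.
move=> H; apply/eqP => z0; move: H; rewrite z0 expr0n.
case: h h0 => // n _ [] /eqP; rewrite eq_sym ?oner_eq0 //.
by rewrite eqr_oppLR oppr0 oner_eq0.
Qed.

Lemma pow_even (z : K) : z ^+ h = 1 -> exists s, z = G ^+ (2 * s).
Proof.
move=> zh; have [t zt] := nz_pow (nz_of_pow (or_introl zh)).
move: zh; rewrite zt Gt_h; case: ifP => ot.
  by move=> e; move: m1; rewrite e eqxx.
by exists (t %/ 2)%N; congr (G ^+ _); lia.
Qed.

Lemma pow_odd (z : K) : z ^+ h = -1 -> exists s, z = G ^+ (2 * s + 1).
Proof.
move=> zh; have [t zt] := nz_pow (nz_of_pow (or_intror zh)).
move: zh; rewrite zt Gt_h; case: ifP => ot.
  by exists (t %/ 2)%N; congr (G ^+ _); lia.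
by move=> e; move: m1; rewrite -e eqxx.
Qed.

Lemma Rs_1 f (z : K) j : z ^+ h = 1 -> Rs f z j = etaS f j.
Proof. by move=> /pow_even [s ->]; rewrite Rs_even. Qed.

Lemma Rs_m1_0 f (z : K) : z ^+ h = -1 -> Rs f z 0 = etaS f 1.
Proof. by move=> /pow_odd [s ->]; rewrite Rs_odd0. Qed.

Lemma Rs_m1_1 f (z : K) : z ^+ h = -1 -> Rs f z 1 = etaS f 0.
Proof. by move=> /pow_odd [s ->]; rewrite Rs_odd1. Qed.

Lemma sum_split2 (F : nat -> V) n :
  \sum_(e < 2 * n) F e = \sum_(k < n) F (2 * k)%N + \sum_(k < n) F (2 * k + 1)%N.
Proof.
elim: n => [|n IH]; first by rewrite !big_ord0 addr0.
have -> : (2 * n.+1 = (2 * n).+2)%N by lia.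
rewrite !big_ord_recr /= IH -!addrA; congr (_ + _).
by rewrite addrCA addn1.
Qed.

Lemma eta_sum01 f : etaS f 0 + etaS f 1 = \sum_(z in [set~ 0]) f z.
Proof.
have N0 : (0 < 2 * h)%N by lia.
have inj : {in [set: 'I_(2 * h)] &, injective (fun i : 'I_(2 * h) => G ^+ i)}.
  move=> a b _ _ /(isord_inj N0 Go (ltn_ord a) (ltn_ord b)); exact: val_inj.
rewrite -image_nz.
have -> : [set G ^+ (i : nat) | i : 'I_(2 * h)] =
          [set G ^+ (i : nat) | i : 'I_(2 * h) in [set: 'I_(2 * h)]] by apply/setP => x; apply/imsetP/imsetP => [[i _ ->]|[i _ ->]]; exists i.
rewrite big_imset //=.
rewrite (eq_bigl xpredT); last by move=> i; rewrite inE.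
rewrite (sum_split2 (fun e => f (G ^+ e))) /etaS; congr (_ + _).
by apply: eq_bigr => k _; rewrite addn0.
Qed.
End Rot.


Lemma mem_sum (R : nmodType) (n : nat) (s : seq nat) (F : nat -> R) :
  uniq s -> all (fun i => (i < n)%N) s ->
  \sum_(i < n | (i : nat) \in s) F i = \sum_(i <- s) F i.
Proof.
move=> us alls.
rewrite -(big_mkord (fun i => i \in s)) -big_filter.
apply: perm_big; apply: uniq_perm; rewrite ?filter_uniq ?iota_uniq //.
move=> i; rewrite mem_filter mem_iota /= add0n.
by case: (boolP (i \in s)) => //= H; rewrite subn0 (allP alls i H).
Qed.

Section Main.
Variables (p : nat) (g : int).
Hypotheses (pp : prime p) (op : odd p) (og : odd `|g|%N) (prg : primroot_mod p g).

Local Notation h := ((p.-1)./2).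
Local Notation G := ((g%:~R : 'F_p)).
Definition uu e := resz p (g ^+ e).
Definition vv e := resz (2 * p) (g ^+ e).

Lemma p_eq : p = (2 * h + 1)%N. Proof. lia. Qed.
Lemma h_gt0 : (0 < h)%N. Proof. have := prime_gt1 pp; lia. Qed.

Lemma Go : isord G (2 * h).
Proof. have -> : (2 * h = p.-1)%N by lia. exact: primroot_isord. Qed.

Lemma uG e : ((uu e)%:R : 'F_p) = G ^+ e.
Proof. by rewrite /uu -(intFp _ _ _ pp (prime_gt0 pp) (dvdnn p)) intXFp. Qed.

Lemma vG e : ((vv e)%:R : 'F_p) = G ^+ e.
Proof.
have n0 : (0 < 2 * p)%N by have := prime_gt0 pp; lia.
by rewrite /vv -(intFp _ _ _ pp n0 (dvdn_mull 2 (dvdnn p))) intXFp.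
Qed.

Lemma vodd e : odd (vv e).
Proof. by apply: resz_odd; [exact: prime_gt0 | rewrite abszX oddX og orbT]. Qed.

Lemma ult e : (uu e < p)%N. Proof. exact/resz_lt/prime_gt0. Qed.
Lemma vlt e : (vv e < 2 * p)%N. Proof. by apply/resz_lt; have := prime_gt0 pp; lia. Qed.

Lemma u_pos e : (0 < uu e)%N.
Proof.
rewrite lt0n; apply/negP => /eqP u0; have := uG e; rewrite u0 => /esym /eqP.
by rewrite expf_eq0 (negbTE (isord_neq0 _ Go)) ?andbF // muln_gt0 h_gt0.
Qed.

Lemma Ginj a b : (a < 2 * h)%N -> (b < 2 * h)%N -> G ^+ a = G ^+ b -> a = b.
Proof. apply: isord_inj Go; by rewrite muln_gt0 h_gt0. Qed.

Lemma Dp_uniq j : (j <= 1)%N -> uniq (Dset p p j g).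
Proof.
move=> j1; rewrite map_inj_in_uniq ?iota_uniq // => a b.
rewrite !mem_iota !add0n => /andP [_ ah] /andP [_ bh] e.
have := congr1 (fun n => (n%:R : 'F_p)) e; rewrite /= -!/(uu _) !uG.
move/Ginj; lia.
Qed.

Lemma D2p_uniq j : (j <= 1)%N -> uniq (Dset p (2 * p) j g).
Proof.
move=> j1; rewrite map_inj_in_uniq ?iota_uniq // => a b.
rewrite !mem_iota !add0n => /andP [_ ah] /andP [_ bh] e.
have := congr1 (fun n => (n%:R : 'F_p)) e; rewrite /= -!/(vv _) !vG.
move/Ginj; lia.
Qed.

Lemma memD n j x : x \in Dset p n j g ->
  exists2 k, (k < h)%N & x = resz n (g ^+ (2 * k + j)).
Proof. by case/mapP => k; rewrite mem_iota add0n => /andP [_ kh] ->; exists k. Qed.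

Lemma mem2D j x : x \in twoD p j g -> exists2 k, (k < h)%N & x = (2 * uu (2 * k + j))%N.
Proof.
case/mapP => a /memD [k kh ->] ->; exists k => //.
by rewrite modn_small // -/(uu _); have := ult (2 * k + j); lia.
Qed.

Lemma C1_uniq : uniq (C1 p g).
Proof.
rewrite /C1 cons_uniq cat_uniq D2p_uniq //=.
have nD : forall x, x \in Dset p (2 * p) 1 g -> odd x.
  by move=> x /memD [k _ ->]; apply: vodd.
have n2D : forall x, x \in twoD p 1 g -> ~~ odd x /\ (0 < x)%N.
  move=> x /mem2D [k _ ->]; have := u_pos (2 * k + 1); split; lia.
apply/and3P; split.
- rewrite mem_cat negb_or; apply/andP; split; apply/negP.
    by move/nD.
  by move/n2D => [_]; lia.
- apply/hasPn => x /n2D [ox _]; apply/negP => /nD; rewrite (negbTE ox).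
  by [].
- rewrite map_inj_in_uniq ?Dp_uniq // => a b /memD [k _ ->] /memD [l _ ->].
  rewrite -!/(uu _) !modn_small; [lia | | ].
  + by have := ult (2 * l + 1); lia.
  + by have := ult (2 * k + 1); lia.
Qed.

Lemma C1_lt : all (fun i => (i < 2 * p)%N) (C1 p g).
Proof.
apply/allP => x; rewrite /C1 inE mem_cat => /orP [/eqP ->|/orP [/memD [k _ ->]|/mem2D [k _ ->]]].
- by have := prime_gt0 pp; lia.
- exact: vlt.
- by have := ult (2 * k + 1); lia.
Qed.

Lemma iota_ord (R : nmodType) (F : nat -> R) n :
  \sum_(k <- iota 0 n) F k = \sum_(k < n) F k.
Proof. by rewrite -(big_mkord xpredT) /index_iota subn0. Qed.

Lemma S_eval (K : fieldType) (x : K) :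
  (Spoly K p g).[x] = 1 + \sum_(k < h) x ^+ (vv (2 * k + 1))
                        + \sum_(k < h) x ^+ (2 * uu (2 * k + 1))%N.
Proof.
rewrite /Spoly horner_poly.
rewrite (eq_bigr (fun i : 'I_(2 * p) => if (i : nat) \in C1 p g then x ^+ i else 0)); last first.
  move=> i _; rewrite /sseq modn_small //; case: (_ \in _).
    by rewrite mul1r.
  by rewrite mul0r.
rewrite -big_mkcond /= mem_sum ?C1_uniq ?C1_lt //.
rewrite /C1 big_cons expr0 big_cat /= addrA; congr (_ + _ + _).
  by rewrite big_map iota_ord.
rewrite /twoD big_map /Dset big_map iota_ord; apply: eq_bigr => k _.
by rewrite -/(uu _) modn_small //; have := ult (2 * k + 1); lia.
Qed.

End Main.


Section Main2.
Variables (p : nat) (g : int).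
Hypotheses (pp : prime p) (op : odd p) (og : odd `|g|%N) (prg : primroot_mod p g).
Variables (K : fieldType) (beta : K).
Hypothesis bprim : (2 * p)%N.-primitive_root beta.

Local Notation h := ((p.-1)./2).
Local Notation G := ((g%:~R : 'F_p)).

Definition w (z : 'F_p) : K := beta ^+ (2 * z).

Lemma b2p : beta ^+ (2 * p) = 1. Proof. exact: prim_expr_order. Qed.

Lemma bp : beta ^+ p = -1.
Proof.
have : (beta ^+ p) ^+ 2 == 1 by rewrite -exprM mulnC b2p.
rewrite sqrf_eq1 => /orP [/eqP e|/eqP //].
have : beta ^+ p == beta ^+ 0 by rewrite e expr0.
rewrite (eq_prim_root_expr bprim) mod0n modn_small; first by have := prime_gt0 pp; lia.
by have := prime_gt0 pp; lia.
Qed.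

Lemma w_nat n : w (n%:R) = beta ^+ (2 * n).
Proof.
rewrite /w val_Fp_nat // !exprM; apply: expr_mod.
by rewrite -exprM b2p.
Qed.

Lemma odd_pow n : odd n -> beta ^+ n = - beta ^+ (2 * (n * h.+1)).
Proof.
move=> on.
have -> : (2 * (n * h.+1) = n + p * n)%N.
  have ph : p = (2 * h + 1)%N by lia.
  by rewrite {2}ph; ring.
rewrite exprD exprM bp -signr_odd on expr1 mulrN1 opprK //.
Qed.

Lemma b2_ne1 : beta ^+ 2 != 1.
Proof.
rewrite -(expr0 beta) (eq_prim_root_expr bprim) mod0n modn_small //.
have := prime_gt1 pp; lia.
Qed.

Lemma sum_w_all : \sum_(z : 'F_p) w z = 0.
Proof.
rewrite /w.
have E : forall z : 'F_p, beta ^+ (2 * z) = (beta ^+ 2) ^+ z by move=> z; rewrite exprM.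
rewrite (eq_bigr _ (fun z _ => E z)).
have := subrX1 (beta ^+ 2) (Zp_trunc (pdiv p)).+2.
rewrite Fp_cast // -exprM b2p subrr => /esym /eqP.
rewrite mulf_eq0 subr_eq0 (negbTE b2_ne1) /= => /eqP.
done.
Qed.

Definition yy : 'F_p := (h.+1)%:R.

Lemma two_y : 2%:R * yy = 1.
Proof.
rewrite /yy -natrM; have -> : (2 * h.+1 = p + 1)%N by lia.
by rewrite natrD (pchar_Fp_0 pp) add0r.
Qed.

Lemma SD l i : (Spoly K p g).[beta ^+ (vv p g (2 * l + i))] =
  1 - Rs G h w (G ^+ (2 * l + i) * yy) 1 + Rs G h w (G ^+ (2 * l + i)) 1.
Proof.
rewrite (S_eval pp op og prg); congr (1 + _ + _).
  rewrite /Rs -sumrN; apply: eq_bigr => k _.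
  rewrite -exprM odd_pow; last by rewrite oddM !(vodd pp og).
  rewrite -w_nat !natrM !(vG pp op og prg) /yy; do 2 f_equal.
  have H := mulrAC (G ^+ (2 * l + i)) (G ^+ (2 * k + 1)) ((h.+1)%:R : 'F_p).
  exact H.
rewrite /Rs; apply: eq_bigr => k _.
by rewrite -exprM mulnCA -w_nat natrM (vG pp op og prg) (uG _ pp).
Qed.

Lemma S2D l i : (Spoly K p g).[beta ^+ (2 * uu p g (2 * l + i))] =
  1 + Rs G h w (G ^+ (2 * l + i)) 1 + Rs G h w (2%:R * G ^+ (2 * l + i)) 1.
Proof.
rewrite (S_eval pp op og prg); congr (1 + _ + _).
  rewrite /Rs; apply: eq_bigr => k _.
  by rewrite -exprM -mulnA -w_nat natrM (vG pp op og prg) (uG _ pp).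
rewrite /Rs; apply: eq_bigr => k _.
rewrite -exprM -mulnA -w_nat !natrM !(uG _ pp); congr (w _).
have H := mulrCA (G ^+ (2 * l + i)) (2%:R : 'F_p) (G ^+ (2 * k + 1)).
by rewrite H mulrA.
Qed.

Lemma S0 : (Spoly K p g).[beta ^+ 0] = p%:R.
Proof.
rewrite (S_eval pp op og prg) expr0.
under eq_bigr do rewrite expr1n.
under [X in _ + _ + X]eq_bigr do rewrite expr1n.
rewrite sumr_const card_ord.
have -> : (p%:R : K) = (1 + h + h)%N%:R by congr (_%:R); lia.
by rewrite !natrD.
Qed.

Lemma Sp : (Spoly K p g).[beta ^+ p] = 1.
Proof.
rewrite (S_eval pp op og prg) bp.
under eq_bigr do rewrite -signr_odd (vodd pp og) expr1.
under [X in _ + _ + X]eq_bigr do rewrite exprM sqrrN !expr1n.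
by rewrite !sumr_const card_ord mulNrn subrK.
Qed.

Lemma Dp_lt j : all (fun i => (i < p)%N) (Dset p p j g).
Proof. by apply/allP => x /memD [k _ ->]; apply: (ult _ pp). Qed.

Lemma eta_link j : (j <= 1)%N -> eta_sum p j g beta = etaS G h w j.
Proof.
move=> j1; rewrite /eta_sum (mem_sum (fun i => beta ^+ (2 * i)) (Dp_uniq pp op og prg j1) (Dp_lt j)).
rewrite /Dset big_map iota_ord /etaS; apply: eq_bigr => k _.
by rewrite -w_nat -/(uu p g _) (uG _ pp).
Qed.

Lemma cardFp : #|'F_p| = (2 * h).+1.
Proof. rewrite card_Fp //; lia. Qed.

Lemma m1Fp : (1 : 'F_p) != -1.
Proof.
apply/negP => /eqP e.
have : (2%:R : 'F_p) != 0 by apply: natFp_neq0 => //; have := prime_gt1 pp; lia.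
by rewrite mulr2n {2}e subrr eqxx.
Qed.

Lemma eta_sum_m1 : etaS G h w 0 + etaS G h w 1 = -1.
Proof.
rewrite (eta_sum01 (h_gt0 pp op og prg) (Go pp op og prg) cardFp m1Fp).
have := sum_w_all; rewrite (bigD1 0) //=.
have -> : w 0 = 1 by rewrite /w muln0 expr0.
move/eqP; rewrite addrC addr_eq0 => /eqP <-.
apply: eq_bigl => z; rewrite !inE.
done.
Qed.

Lemma R1 z : z ^+ h = 1 -> Rs G h w z 1 = etaS G h w 1.
Proof. exact: (Rs_1 (h_gt0 pp op og prg) (Go pp op og prg) cardFp m1Fp). Qed.

Lemma Rm1 z : z ^+ h = -1 -> Rs G h w z 1 = etaS G h w 0.
Proof. exact: (Rs_m1_1 (h_gt0 pp op og prg) (Go pp op og prg) cardFp m1Fp). Qed.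

Lemma GH l i : (i <= 1)%N -> (G ^+ (2 * l + i)) ^+ h = if i == 1%N then -1 else 1.
Proof.
move=> i1; rewrite (Gt_h (h_gt0 pp op og prg) (Go pp op og prg)).
have -> : odd (2 * l + i) = (i == 1%N) by case: i i1 => [|[|]] //= _; lia.
by [].
Qed.

Lemma yH2 : (2%:R : 'F_p) ^+ h * yy ^+ h = 1.
Proof. by rewrite -exprMn two_y expr1n. Qed.

Lemma yH_1 : (2%:R : 'F_p) ^+ h = 1 -> yy ^+ h = 1.
Proof. by move=> e; have := yH2; rewrite e mul1r. Qed.

Lemma yH_m1 : (2%:R : 'F_p) ^+ h = -1 -> yy ^+ h = -1.
Proof. by move=> e; have := yH2; rewrite e mulN1r => /eqP; rewrite eqr_oppLR => /eqP. Qed.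

End Main2.

Unset Implicit Arguments. Set Strict Implicit. Set Printing Implicit Defensive.


Theorem lemma8 (p : nat) (g : int) (r m : nat) (F : finFieldType) (beta : F) :
  prime p -> odd p ->
  odd `|g|%N -> primroot_mod p g -> primroot_mod (2 * p) g ->
  prime r -> (5 <= r)%N -> r != p ->
  is_ord_mod p r m ->
  #|F| = (r ^ m)%N ->
  (2 * p)%N.-primitive_root beta ->
  let S := Spoly F p g in
  let eta0 := eta_sum p 0 g beta in
  let eta1 := eta_sum p 1 g beta in
  ((p %% 8 == 1)%N || (p %% 8 == 7)%N ->
   forall k : nat, (k < 2 * p)%N ->
     (k = 0%N -> S.[beta ^+ k] = p%:R) /\
     ((k \in Dset p (2 * p) 0 g) || (k \in Dset p (2 * p) 1 g) || (k == p) ->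
        S.[beta ^+ k] = 1) /\
     (k \in twoD p 0 g -> S.[beta ^+ k] = 1 + 2 * eta1) /\
     (k \in twoD p 1 g -> S.[beta ^+ k] = 1 + 2 * eta0))
  /\
  ((p %% 8 == 3)%N || (p %% 8 == 5)%N ->
   forall k : nat, (k < 2 * p)%N ->
     (k = 0%N -> S.[beta ^+ k] = p%:R) /\
     (k = p -> S.[beta ^+ k] = 1) /\
     (k \in Dset p (2 * p) 0 g -> S.[beta ^+ k] = - (2 * eta0)) /\
     (k \in Dset p (2 * p) 1 g -> S.[beta ^+ k] = - (2 * eta1)) /\
     ((k \in twoD p 0 g) || (k \in twoD p 1 g) -> S.[beta ^+ k] = 0)).
Proof.
move=> pp op og prg _ _ _ _ _ _ bprim S eta0 eta1.
have SD' := SD pp op og prg bprim.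
have S2D' := S2D pp op og prg bprim.
have R1' := R1 pp op og prg bprim.
have Rm1' := Rm1 pp op og prg bprim.
have GH' := GH pp op og prg bprim.
have S0' := S0 pp op og prg bprim.
have Sp' := Sp pp op og prg bprim.
have Hs := eta_sum_m1 pp op og prg bprim.
rewrite /S /eta0 /eta1 (eta_link pp op og prg bprim (j := 0)) //.
rewrite (eta_link pp op og prg bprim (j := 1)) //.
move: Hs.
set e0 := etaS _ _ _ 0; set e1 := etaS _ _ _ 1 => Hs.
have two : forall x : F, 2 * x = x + x by move=> x; ring.
have [two1 two2] := two_char pp op.
split => Hp k kp.
- have e2 := two1 Hp; have ey := yH_1 pp op og prg bprim e2.
  split; first by move=> ->; exact: S0'.
  split.
    case/orP => [/orP [] | /eqP ->]; last exact: Sp'.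
    + move/memD => [l lh ->]; rewrite SD' R1' ?R1' ?exprMn ?GH' ?ey ?mulr1 //.
      by rewrite subrK.
    + move/memD => [l lh ->]; rewrite SD' Rm1' ?Rm1' ?exprMn ?GH' ?ey ?mulr1 //.
      by rewrite subrK.
  split.
    move/(mem2D pp op og prg) => [l lh ->]; rewrite S2D' R1' ?R1' ?exprMn ?GH' ?e2 ?mulr1 //.
    by rewrite two addrA.
  move/(mem2D pp op og prg) => [l lh ->]; rewrite S2D' Rm1' ?Rm1' ?exprMn ?GH' ?e2 ?mul1r //.
  by rewrite two addrA.
- have e2 := two2 Hp; have ey := yH_m1 pp op og prg bprim e2.
  have He1 : e1 = -1 - e0 by rewrite -Hs; ring.
  split; first by move=> ->; exact: S0'.
  split; first by move=> ->; exact: Sp'.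
  split.
    move/memD => [l lh ->]; rewrite SD' Rm1' ?R1' ?exprMn ?GH' ?ey ?mulr1 ?mul1r //.
    by rewrite -/e0 -/e1 He1; ring.
  split.
    move/memD => [l lh ->]; rewrite SD' R1' ?Rm1' ?exprMn ?GH' ?ey ?mulrN1 ?opprK //.
    by rewrite -/e0 -/e1 He1; ring.
  case/orP.
    move/(mem2D pp op og prg) => [l lh ->]; rewrite S2D' R1' ?Rm1' ?exprMn ?GH' ?e2 ?mulr1 //.
    by rewrite -/e0 -/e1 He1; ring.
  move/(mem2D pp op og prg) => [l lh ->]; rewrite S2D' Rm1' ?R1' ?exprMn ?GH' ?e2 ?mulrN1 ?opprK //.
  by rewrite -/e0 -/e1 He1; ring.
Qed.
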